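(* Let $\epsilon\in(0,1/4)$. There is $n_0(\epsilon)$ such that the following holds for $n\ge n_0$. Let $G$ be a graph on $n$ vertices with minimum degree $\delta$, where $\delta\ge(\ln n)^{2/\epsilon}(\ln\ln n)^{1/\epsilon}$, and assume $s^*=\delta^{1/2+\epsilon}$ and $k=\delta^{1/2-\epsilon}/\ln\ln n$ are integers. With the random partition $V(G)=B\cup S$, $S=S_1\cup\dots\cup S_k$ described in the context, with probability at least $1-1/n^2$ we have $|L(v)|\le\frac{42\,n\deg(v)\ln n}{k\,\delta^{1+\epsilon}}$ for every $v\in S$.
   Context: Graphs are finite and simple; $\deg(v)$ is the degree of $v$ in $G$; $\ln$ is the natural logarithm. Random partition: let $X_v$, $v\in V(G)$, be i.i.d. uniform on $[0,1]$. For each integer $1\le i\le\delta-s^*$, put $v$ in $B_i$ if $X_v\in[\frac{i-1}{\delta},\frac{i}{\delta})$. For $1\le j\le k-1$, put $v$ in $S_j$ if $X_v\in\left[\frac{\delta-s^*}{\delta}+\frac{(j-1)s^*}{\delta k},\frac{\delta-s^*}{\delta}+\frac{js^*}{\delta k}\right)$, and put $v$ in $S_k$ if $X_v\in\left[\frac{\delta-s^*}{\delta}+\frac{(k-1)s^*}{\delta k},1\right]$. Let $B=\bigcup_iB_i$, $S=\bigcup_jS_j$. For $v\in S_i$ define the interval $I_{v,i}=\left[\deg(v)\left(1-\frac{4s^*i}{\delta}-\frac{34\ln n}{\delta^{\epsilon}}\right),\ \deg(v)\left(1-\frac{4s^*i}{\delta}+\frac{3s^*}{\delta}\right)\right]$.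 For $v\in S_i$, $L(v)$ is the set of vertices $u\in S$, $u\ne v$, such that $u\in S_j$ with $I_{v,i}\cap I_{u,j}\neq\emptyset$. *)

(* Defs.v *)
From HB Require Import structures.
From mathcomp Require Import all_boot all_order all_algebra.
From mathcomp Require Import all_classical all_reals all_analysis.
Set Implicit Arguments. Unset Strict Implicit. Unset Printing Implicit Defensive.
Import Order.TTheory GRing.Theory Num.Theory.
Local Open Scope classical_set_scope.
Local Open Scope ring_scope.

Definition simple_graph (T : finType) (e : rel T) : Prop :=
  symmetric e /\ irreflexive e.

Definition deg (T : finType) (e : rel T) (v : T) : nat := #|[set u | e v u]|.

Definition is_min_degree (T : finType) (e : rel T) (delta : nat) : Prop :=
  (forall v, (delta <= deg e v)%N) /\ exists v, deg e v = delta.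

Section Partition.
Variables (R : realType) (delta s k : nat).
(* X_v = x lies in S_j (1 <= j <= k) *)
Definition inS (j : nat) (x : R) : bool :=
  let lo := (delta%:R - s%:R) / delta%:R + (j%:R - 1) * s%:R / (delta%:R * k%:R) in
  let hi := (delta%:R - s%:R) / delta%:R + j%:R * s%:R / (delta%:R * k%:R) in
  [&& (1 <= j)%N, (j <= k)%N, lo <= x &
      if (j < k)%N then x < hi else x <= 1].

(* X_v = x lies in B_i (1 <= i <= delta - s) *)
Definition inB (i : nat) (x : R) : bool :=
  [&& (1 <= i)%N, (i <= delta - s)%N,
      (i%:R - 1) / delta%:R <= x & x < i%:R / delta%:R].

Variable eps : R.
(* endpoints of the interval I_{v,i}, where dv = deg(v) and n = |V(G)| *)
Definition Ilo (n dv i : nat) : R :=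
  dv%:R * (1 - 4%:R * s%:R * i%:R / delta%:R
             - 34%:R * ln (n%:R) / (delta%:R `^ eps)).
Definition Ihi (dv i : nat) : R :=
  dv%:R * (1 - 4%:R * s%:R * i%:R / delta%:R + 3%:R * s%:R / delta%:R).

Definition inter_nonempty (a1 b1 a2 b2 : R) : Prop :=
  exists y : R, a1 <= y <= b1 /\ a2 <= y <= b2.

(* L(v) for v in S_i, given the realization x of (X_u)_u *)
Definition Lset (T : finType) (e : rel T) (x : T -> R) (v : T) (i : nat) : {set T} :=
  [set u | `[< u <> v /\ exists j, inS j (x u) /\
     inter_nonempty (Ilo #|T| (deg e v) i) (Ihi (deg e v) i)
                    (Ilo #|T| (deg e u) j) (Ihi (deg e u) j) >]].
End Partition.

Definition mutually_independent d (Omega : measurableType d) (R : realType)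
    (P : probability Omega R) (V : finType) (X : V -> {RV P >-> R}) : Prop :=
  forall (J : {set V}) (A : V -> set R), (forall j, measurable (A j)) ->
    P (\bigcap_(j in [set j | j \in J]) (X j @^-1` A j)) =
    (\prod_(j in J) P (X j @^-1` A j))%E.

Definition uniform01 d (Omega : measurableType d) (R : realType)
    (P : probability Omega R) (X : {RV P >-> R}) : Prop :=
  forall A : set R, measurable A ->
    distribution P X A = uniform_prob (@ltr01 R) A.

(* Main.v *)
Require Import Defs.
From HB Require Import structures.
From mathcomp Require Import all_boot all_order all_algebra.
From mathcomp Require Import all_classical all_reals all_analysis.
From mathcomp Require Import ring lra zify measurable_realfun.
Import Order.TTheory GRing.Theory Num.Theory.

Module Aux1.
Set Implicit Arguments. Unset Strict Implicit. Unset Printing Implicit Defensive.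
Local Open Scope ring_scope.

Lemma expR_half_le2 (R : realType) : expR (2^-1 : R) <= 2.
Proof.
have h := expR_ge1Dx (- (2^-1 : R)).
rewrite expRN in h.
have p := expR_gt0 (2^-1 : R).
have h2 : (2^-1 : R) <= (expR (2^-1)) ^-1 by lra.
have h3 : 2^-1 * expR (2^-1 : R) <= 1.
  rewrite -[X in _ <= X](mulVf (lt0r_neq0 p)) ler_wpM2r //; exact: ltW.
lra.
Qed.

Section Chernoff.
Variables (R : realType) (V Ix : finType) (q : V -> Ix -> R).
Hypotheses (hq0 : forall u j, 0 <= q u j) (hq1 : forall u, \sum_j q u j = 1).
Variables (g : V -> Ix -> bool) (b : R).

Lemma card_sumE (f : {ffun V -> Ix}) :
  (#|[set u | g u (f u)]|%:R : R) = \sum_u (g u (f u))%:R.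
Proof.
rewrite -sum1_card natr_sum big_mkcond /=; apply: eq_bigr => u _.
by rewrite inE; case: (g u (f u)).
Qed.

Lemma chernoff_fin :
  \sum_(f : {ffun V -> Ix} | b < #|[set u | g u (f u)]|%:R) \prod_u q u (f u)
  <= expR (\sum_u \sum_(j | g u j) q u j - b / 2).
Proof.
have P0 f : 0 <= \prod_u q u (f u) by apply: prodr_ge0.
apply: (@le_trans _ _ (\sum_(f : {ffun V -> Ix})
   expR (- b / 2) * \prod_u (q u (f u) * expR ((g u (f u))%:R / 2)))).
  rewrite big_mkcond /=; apply: ler_sum => f _.
  rewrite big_split /= -expR_sum mulrCA -expRD.
  case: ifP => hf; last by rewrite mulr_ge0 ?expR_ge0.
  rewrite ler_peMr // -[X in X <= _]expR0 ler_expR -mulr_suml -card_sumE.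
  move: hf; lra.
rewrite -mulr_sumr -(bigA_distr_bigA (fun u j => q u j * expR ((g u j)%:R / 2))) /=.
apply: (@le_trans _ _ (expR (- b / 2) * \prod_u expR (\sum_(j | g u j) q u j))); last first.
  by rewrite -expR_sum -expRD addrC ler_expR mulNr.
rewrite ler_pM2l ?expR_gt0 //; apply: ler_prod => u _.
rewrite sumr_ge0 /=; last by move=> j _; rewrite mulr_ge0 ?expR_ge0.
apply: (@le_trans _ _ (1 + \sum_(j | g u j) q u j)); last exact: expR_ge1Dx.
rewrite -[X in _ <= X + _](hq1 u) (big_mkcond (fun j => g u j)) -big_split /=.
apply: ler_sum => j _; case: (g u j) => /=.
  have h1 := expR_half_le2 R; have h2 := hq0 u j.
  have e1 : (1%:R / 2 : R) = 2^-1 by rewrite mul1r.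
  rewrite e1; nra.
by rewrite mul0r expR0 mulr1 addr0.
Qed.
End Chernoff.


Lemma card_window (R : realFieldType) m (P : pred 'I_m) (a x y : R) :
  0 < a -> x <= y -> (forall j : 'I_m, P j -> x <= a * (j : nat)%:R <= y) ->
  (#|[set j | P j]|%:R : R) <= (y - x) / a + 1.
Proof.
move=> a0 xy hP.
have h0 : 0 <= (y - x) / a by rewrite divr_ge0 ?subr_ge0 // ltW.
case: (pickP P) => [j0 Pj0|none]; last first.
  rewrite (_ : [set j | P j] = (finset.set0 : {set 'I_m})); first by rewrite cards0; lra.
  by apply/setP => j; rewrite !inE none.
case: (arg_minnP (fun j : 'I_m => (j : nat)) Pj0) => jm Pjm minj.
case: (arg_maxnP (fun j : 'I_m => (j : nat)) Pj0) => jM PjM maxj.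
have cle : (#|[set j | P j]| <= (jM - jm).+1)%N.
  rewrite cardE -(size_map val).
  have -> : (jM - jm).+1 = size (iota jm (jM - jm).+1) by rewrite size_iota.
  apply: uniq_leq_size; first by rewrite map_inj_uniq ?enum_uniq //; exact: val_inj.
  move=> z /mapP[j]; rewrite mem_enum inE => Pj ->.
  rewrite mem_iota; have := minj j Pj; have := maxj j Pj; move=> a1 a2; apply/andP; split; [exact: a2|]; rewrite addnS ltnS subnKC //; exact: leq_trans a2 a1.
have jmM : (jm <= jM)%N by apply: maxj.
apply: (le_trans (_ : _ <= ((jM - jm).+1)%:R)); first by rewrite ler_nat.
have := hP _ Pjm; have := hP _ PjM => /andP[_ h1] /andP[h2 _].
rewrite -addn1 natrD natrB // lerD2r ler_pdivlMr //.
rewrite mulrBl mulrC [X in _ - X]mulrC; lra.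
Qed.

Lemma count_abs (R : realFieldType) m (P : pred 'I_m) (A H c du dv iR : R) :
  0 < A -> 0 <= H -> H <= 3/100 -> 0 <= c -> c <= 1/100 -> A * iR <= 4/100 ->
  0 < du -> 0 <= dv ->
  (forall j : 'I_m, P j -> 0 <= A * (j:nat)%:R /\
     du * (1 - A * (j:nat)%:R - c) <= dv * (1 - A * iR + H) /\
     dv * (1 - A * iR - c) <= du * (1 - A * (j:nat)%:R + H)) ->
  (#|[set j | P j]|%:R : R) <= 21/10 * (H + c) / A + 1.
Proof.
move=> A0 H0 H1 c0 c1 Ai du0 dv0 hP.
have hr : 0 <= 21/10 * (H + c) / A by rewrite divr_ge0 ?mulr_ge0 ?addr_ge0 // ltW.
case: (pickP P) => [j0 Pj0|none]; last first.
  rewrite (_ : [set j | P j] = (finset.set0 : {set 'I_m})); first by rewrite cards0; lra.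
  by apply/setP => j; rewrite !inE none.
have dvu : dv <= 11/10 * du.
  have [a1 [_ a3]] := hP _ Pj0.
  have : dv * (95/100) <= dv * (1 - A * iR - c) by rewrite ler_wpM2l //; lra.
  nra.
pose x := du * (1 - c) - dv * (1 - A * iR + H).
pose y := du * (1 + H) - dv * (1 - A * iR - c).
have xy : y - x = (H + c) * (du + dv) by rewrite /x /y; ring.
have := @card_window R m P (A * du) x y.
rewrite mulr_gt0 // => /(_ isT).
have xley : x <= y by rewrite -subr_ge0 xy mulr_ge0 ?addr_ge0 // ltW.
have hw : forall j : 'I_m, P j -> x <= A * du * (j:nat)%:R <= y.
  move=> j Pj; have [a1 [a2 a3]] := hP _ Pj; apply/andP; split; rewrite /x /y.
    have e : du * (1 - A * (j:nat)%:R - c) = du * (1 - c) - A * du * (j:nat)%:R by ring.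
    lra.
  have e : du * (1 - A * (j:nat)%:R + H) = du * (1 + H) - A * du * (j:nat)%:R by ring.
  lra.
move=> /(_ xley hw) h.
apply: (le_trans h); rewrite lerD2r xy.
rewrite ler_pdivrMr ?mulr_gt0 //.
have e : 21 / 10 * (H + c) / A * (A * du) = 21/10 * (H + c) * du.
  by field; rewrite gt_eqF.
rewrite e; nra.
Qed.


Lemma numfacts (R : realType) (eps D lnN L sR kR : R) :
  0 < eps -> eps < 4%:R^-1 -> 1 <= lnN -> 1 <= L ->
  lnN `^ (2%:R / eps) * L `^ (1 / eps) <= D ->
  sR = D `^ (2%:R^-1 + eps) -> kR = D `^ (2%:R^-1 - eps) / L ->
  [/\ 1 <= D, lnN ^+ 2 * L <= D `^ eps, sR * kR * L = D,
      sR * D `^ eps <= D & kR * D `^ eps * L <= D] /\ D `^ (1 + eps) = D * D `^ eps.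
Proof.
move=> e0 e4 lN1 L1 hD -> ->.
have p1 : 1 <= lnN `^ (2%:R / eps).
  rewrite -[X in X <= _](powRr0 lnN); apply: ler_powR => //; rewrite divr_ge0 // ltW //.
have p2 : 1 <= L `^ (1 / eps).
  rewrite -[X in X <= _](powRr0 L); apply: ler_powR => //; rewrite divr_ge0 // ltW //.
have D1 : 1 <= D.
  apply: le_trans hD; rewrite -[X in X <= _]mulr1; apply: ler_pM => //.
have D0 : D != 0 by rewrite gt_eqF // (lt_le_trans ltr01 D1).
have L0 : L != 0 by rewrite gt_eqF // (lt_le_trans ltr01 L1).
have DD : D `^ 1 = D by rewrite powRr1 // (le_trans ler01).
split; last by rewrite powRD ?D0 ?implybT // DD.
split => //.
- have := ge0_ler_powR (ltW e0) _ _ hD.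
  rewrite !nnegrE => /(_ (mulr_ge0 (powR_ge0 _ _) (powR_ge0 _ _)) (le_trans ler01 D1)).
  rewrite powRM ?powR_ge0 // -!powRrM.
  have -> : 2%:R / eps * eps = 2%:R by field; rewrite gt_eqF.
  have -> : 1 / eps * eps = 1 by field; rewrite gt_eqF.
  by rewrite powR_mulrn ?powRr1 // (le_trans ler01).
- rewrite mulrA divfK // -powRD ?D0 ?implybT //.
  by have -> : 2%:R^-1 + eps + (2%:R^-1 - eps) = 1 :> R by field.
- rewrite -powRD ?D0 ?implybT // -[X in _ <= X]DD; apply: ler_powR => //; lra.
- rewrite mulrAC divfK // -powRD ?D0 ?implybT // -[X in _ <= X]DD.
  apply: ler_powR => //; lra.
Qed.


Lemma final_ineq (R : realFieldType) (N D sR kR L lnN De dv : R) :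
  0 < D -> 0 < sR -> 1 <= kR -> 100 <= L -> 1 <= lnN -> 0 < De -> D <= dv ->
  sR * De <= D -> kR * De * L <= D -> D <= N ->
  N * (2575/1000 * (sR / (D * kR)) + 525/1000 * (34 * lnN / De) / kR)
   - (42 * N * dv * lnN / (kR * (D * De))) / 2 <= -4 * lnN.
Proof.
move=> D0 s0 k1 L100 l1 De0 Ddv sDe kDeL DN.
have k0 : 0 < kR by lra.
have N0 : 0 < N by lra.
set Q := N / (De * kR).
have Q0 : 0 < Q by rewrite /Q divr_gt0 // mulr_gt0.
set a := N * (sR / (D * kR)).
have e1 : N * (2575/1000 * (sR / (D * kR)) + 525/1000 * (34 * lnN / De) / kR)
   - (42 * N * dv * lnN / (kR * (D * De))) / 2 =
   2575/1000 * a + 525/1000 * 34 * (Q * lnN) - 21 * (Q * lnN) * (dv / D).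
  by rewrite /a /Q; field; rewrite ?gt_eqF.
rewrite e1.
have ha : a <= Q.
  have -> : a = Q * (sR * De / D) by rewrite /a /Q; field; rewrite ?gt_eqF.
  rewrite -[X in _ <= X]mulr1 ler_wpM2l //; first exact: ltW.
  by rewrite ler_pdivrMr // mul1r.
have hd : 1 <= dv / D by rewrite ler_pdivlMr // mul1r.
have hQ : 100 <= Q.
  rewrite /Q ler_pdivlMr ?mulr_gt0 //.
  have h0 : 0 <= kR * De by rewrite mulr_ge0 // ltW.
  have : 100 * (De * kR) <= kR * De * L by nra.
  lra.
have hQl : Q <= Q * lnN by rewrite -[X in X <= _]mulr1 ler_wpM2l // ltW.
have hQl2 : 100 * lnN <= Q * lnN by rewrite ler_wpM2r // (le_trans ler01).
have hQd : Q * lnN <= Q * lnN * (dv / D).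
  have l0 : 0 <= lnN by apply: le_trans l1.
  have : 0 <= Q * lnN by rewrite mulr_ge0 // ltW.
  nra.
lra.
Qed.

End Aux1.
Import Aux1.

Module Aux2.
Set Implicit Arguments. Unset Strict Implicit. Unset Printing Implicit Defensive.
Local Open Scope ring_scope.
Local Open Scope classical_set_scope.

Section Part.
Context (R : realType) (delta s k : nat).
Hypotheses (s0 : (0 < s)%N) (d0 : (0 < delta)%N) (k0 : (0 < k)%N).

Lemma inS_lt j j' (x : R) : (j < j')%N -> inS delta s k j x -> inS delta s k j' x -> False.
Proof.
move=> jj' /and4P[j1 jk loj hij] /and4P[j'1 j'k loj' hij'].
have jlt : (j < k)%N by apply: leq_trans jj' j'k.
rewrite jlt in hij.
have : (j%:R * s%:R / (delta%:R * k%:R) : R) <= (j'%:R - 1) * s%:R / (delta%:R * k%:R).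
  rewrite ler_wpM2r // ?invr_ge0 ?mulr_ge0 // ler_wpM2r //.
  by rewrite lerBrDr natr1 ler_nat.
lra.
Qed.

Lemma inS_uniq j j' (x : R) : inS delta s k j x -> inS delta s k j' x -> j = j'.
Proof.
move=> h h'; case: (ltngtP j j') => // jj'.
- by case: (inS_lt jj' h h').
- by case: (inS_lt jj' h' h).
Qed.

Definition idx (x : R) : 'I_k.+1 := odflt ord0 [pick j : 'I_k.+1 | inS delta s k j x].

Lemma idxP (x : R) (j : nat) : inS delta s k j x -> nat_of_ord (idx x) = j.
Proof.
move=> h; have jk : (j < k.+1)%N by case/and4P: h => _ jk _ _; rewrite ltnS.
rewrite /idx; case: pickP => [j0 hj0 /=|/(_ (Ordinal jk))]; last by rewrite /= h.
exact: inS_uniq hj0 h.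
Qed.

Lemma idx_pos (x : R) : (0 < idx x)%N -> inS delta s k (idx x) x.
Proof.
rewrite /idx; case: pickP => [j0 hj0 /=|] //.
Qed.

Lemma inS0 (x : R) : inS delta s k 0 x = false.
Proof. by []. Qed.


Definition loS (j : nat) : R := (delta%:R - s%:R) / delta%:R + (j%:R - 1) * s%:R / (delta%:R * k%:R).
Definition hiS (j : nat) : R := (delta%:R - s%:R) / delta%:R + j%:R * s%:R / (delta%:R * k%:R).
Lemma inSE j x : inS delta s k j x =
  [&& (1 <= j)%N, (j <= k)%N, loS j <= x & if (j < k)%N then x < hiS j else x <= 1].
Proof. by []. Qed.

Lemma measurable_inS j : measurable [set x : R | inS delta s k j x].
Proof.
have [jj|jj] := boolP [&& (1 <= j)%N & (j <= k)%N]; last first.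
  have -> : [set x : R | inS delta s k j x] = set0.
    apply/seteqP; split => x //=; rewrite inSE => /and4P[a b _ _]; by rewrite a b in jj.
  exact: measurable0.
case/andP: jj => j1 jk; case: (boolP (j < k)%N) => jlt.
  have -> : [set x : R | inS delta s k j x] = `[loS j, hiS j[%classic.
    by apply/seteqP; split => x /=; rewrite inSE in_itv /= j1 jk jlt.
  exact: measurable_itv.
have -> : [set x : R | inS delta s k j x] = `[loS j, 1]%classic.
  by apply/seteqP; split => x /=; rewrite inSE in_itv /= j1 jk (negbTE jlt).
exact: measurable_itv.
Qed.

Definition Cset (j : 'I_k.+1) : set R := [set x | idx x = j].

Lemma Cset_pos (j : 'I_k.+1) : (0 < j)%N -> Cset j = [set x | inS delta s k j x].
Proof.
move=> j0; apply/seteqP; split => x /=.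
  by move=> hx; rewrite -hx; apply: idx_pos; rewrite hx.
by move=> h; apply: val_inj => /=; apply: idxP.
Qed.

Lemma Cset0 : Cset ord0 = \bigcap_(j in [set: 'I_k.+1]) ~` [set x | inS delta s k j x].
Proof.
apply/seteqP; split => x /=.
  move=> hx j _ /= hj; have := idxP hj; rewrite hx /= => j0.
  by move: hj; rewrite -j0.
move=> h; apply: val_inj => /=.
case: (posnP (idx x)) => // /idx_pos hx; by case: (h (idx x) I).
Qed.

Lemma measurable_Cset j : measurable (Cset j).
Proof.
case: (posnP j) => j0.
  have -> : j = ord0 by apply: val_inj.
  rewrite Cset0; apply: fin_bigcap_measurable; first exact: finite_finset.
  by move=> i _; apply: measurableC; apply: measurable_inS.
rewrite Cset_pos //; exact: measurable_inS.
Qed.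

Definition wid : R := s%:R / (delta%:R * k%:R).

Lemma Cset_sub (j : 'I_k.+1) : (0 < j)%N ->
  Cset j `<=` `[loS j, loS j + wid]%classic.
Proof.
have Dp : (delta%:R : R) != 0 by rewrite pnatr_eq0 -lt0n.
have kp : (k%:R : R) != 0 by rewrite pnatr_eq0 -lt0n.
move=> j0; rewrite Cset_pos // => x /=; rewrite inSE => /and4P[_ jk lox hx].
rewrite in_itv /= lox /=.
case: ifP hx => jlt hx.
  apply: ltW; apply: (lt_le_trans hx); rewrite /hiS /loS /wid le_eqVlt; apply/orP; left; apply/eqP.
  field; by rewrite ?Dp ?kp ?mulf_neq0.
apply: (le_trans hx).
have jk' : j = k :> nat by apply/eqP; rewrite eqn_leq jk leqNgt jlt.
rewrite /loS /wid jk' le_eqVlt; apply/orP; left; apply/eqP.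
field; by rewrite Dp kp.
Qed.
End Part.


Lemma unif_le (R : realType) (U : set R) : measurable U ->
  (uniform_prob (@ltr01 R) U <= lebesgue_measure U)%E.
Proof.
move=> mU; rewrite /uniform_prob.
apply: (@le_trans _ _ (\int[lebesgue_measure]_(x in U) cst 1%E x)%E); last first.
  by rewrite integral_cst // mul1e.
apply: ge0_le_integral => //.
- by move=> x _; rewrite lee_fin uniform_pdf_ge0.
- apply/measurable_EFinP; apply: measurable_funTS; exact: measurable_uniform_pdf.
- move=> x _; rewrite /= lee_fin /uniform_pdf; case: ifP => _ //.
  by rewrite subr0 invr1.
Qed.

Lemma leb_itv (R : realType) (a w : R) : 0 <= w ->
  (lebesgue_measure (`[a, (a + w)%R]%classic : set R) <= w%:E)%E.
Proof.
move=> w0; rewrite lebesgue_measure_itv /=; case: ifP => _.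
  by rewrite -EFinD lee_fin addrC addKr.
by rewrite lee_fin.
Qed.

Lemma fin_add d (Omega : measurableType d) (R : realType) (P : probability Omega R)
  (I : finType) (F : I -> set Omega) (G : pred I) :
  (forall i, measurable (F i)) -> (forall i j, i != j -> F i `&` F j = set0) ->
  P (\big[setU/set0]_(i | G i) F i) = (\sum_(i | G i) P (F i))%E.
Proof.
move=> mF dF.
have E1 : \big[setU/set0]_(i | G i) F i = \big[setU/set0]_(i in predT | G i) F i.
  by apply: eq_bigl.
have E2 : (\sum_(i | G i) P (F i) = \sum_(i in predT | G i) P (F i))%E.
  by apply: eq_bigl.
rewrite E1 E2 !(big_enum_val_cond G).
rewrite measure_bigsetU_ord //.
move=> a b _ _ [x [xa xb]].
apply: enum_val_inj; apply/eqP/negP => /negP ab.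
have := dF _ _ ab; rewrite -subset0 => /(_ x); apply; by split.
Qed.

Section Atoms.
Context d (Omega : measurableType d) (R : realType) (P : probability Omega R)
  (V Ix : finType) (cl : R -> Ix) (X : V -> {RV P >-> R}).
Hypotheses (mC : forall j, measurable (cl @^-1` [set j])) (indep : mutually_independent X).

Definition Cc j := cl @^-1` [set j].

Definition Om (f : {ffun V -> Ix}) : set Omega :=
  \bigcap_(u in [set u | u \in (finset.setT : {set V})]) (X u @^-1` Cc (f u)).

Lemma measX u j : measurable (X u @^-1` Cc j).
Proof. by have := measurable_funP (X u) measurableT _ (mC j); rewrite setTI. Qed.

Lemma Om_meas f : measurable (Om f).
Proof.
apply: fin_bigcap_measurable; first exact: finite_finset.
by move=> u _; apply: measX.
Qed.

Lemma Om_in f w : Om f w <-> forall u, cl (X u w) = f u.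
Proof.
split; first by move=> h u; apply: (h u); rewrite /= inE.
by move=> h u _; apply: h.
Qed.

Definition pq u j : R := fine (P (X u @^-1` Cc j)).

Lemma pqE u j : P (X u @^-1` Cc j) = (pq u j)%:E.
Proof.
rewrite /pq fineK // ge0_fin_numE //.
by apply: (le_lt_trans (probability_le1 P (measX u j))); rewrite ltry.
Qed.

Lemma pq_ge0 u j : 0 <= pq u j.
Proof. by rewrite -lee_fin -pqE. Qed.

Lemma Om_prob f : P (Om f) = (\prod_u pq u (f u))%:E.
Proof.
have h := indep (finset.setT : {set V}) (fun u => mC (f u)).
rewrite /Om h.
rewrite -prodEFin; apply: eq_big => [u|u _]; first by rewrite inE.
exact: pqE.
Qed.

Lemma bigU_prob (G : pred {ffun V -> Ix}) :
  P (\big[setU/set0]_(f | G f) Om f) = (\sum_(f | G f) \prod_u pq u (f u))%:E.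
Proof.
rewrite fin_add //; last 2 first.
- exact: Om_meas.
- move=> f f' ff'; apply/seteqP; split => // w [/Om_in h /Om_in h'].
  move/negP: ff'; apply; apply/eqP/ffunP => u; by rewrite -h h'.
rewrite -sumEFin; apply: eq_bigr => f _; exact: Om_prob.
Qed.

Lemma pq_sum u : \sum_j pq u j = 1.
Proof.
have e1 : [set: Omega] = \big[setU/set0]_(j | xpredT j) (X u @^-1` Cc j).
  apply/seteqP; split => // w _; rewrite (bigD1 (cl (X u w))) //=; by left.
have := probability_setT P; rewrite e1 fin_add; last 2 first.
- by move=> j; apply: measX.
- move=> j j' jj'; apply/seteqP; split => // w [/= h h'].
  by move/negP: jj'; apply; rewrite -h h'.
rewrite (eq_bigr (fun j => (pq u j)%:E)); last by move=> j _; rewrite pqE.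
by rewrite sumEFin => -[h]; rewrite -h.
Qed.
End Atoms.

End Aux2.
Import Aux2.

Module Aux3.
Set Implicit Arguments. Unset Strict Implicit. Unset Printing Implicit Defensive.
Local Open Scope ring_scope.

Section Main.
Context (R : realType) (eps : R) (T : finType) (e : rel T) (delta s k : nat).
Context d (Omega : measurableType d) (P : probability Omega R) (X : T -> {RV P >-> R}).
Hypotheses (indep : mutually_independent X) (unif : forall v, uniform01 (X v)).
Hypotheses (d0 : (0 < delta)%N) (k0 : (0 < k)%N).

Local Notation cl := (idx (R:=R) delta s k).

Lemma mC : forall j, measurable (cl @^-1` [set j])%classic.
Proof. move=> j; exact: measurable_Cset. Qed.

Lemma pq_le_wid u (j : 'I_k.+1) : (0 < j)%N -> pq cl X u j <= wid R delta s k.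
Proof.
move=> j0; rewrite -lee_fin -(pqE X mC).
have -> : P (X u @^-1` Cc cl j)%classic = distribution P (X u) (Cset delta s j) by [].
rewrite (unif u) ?measurable_Cset //.
apply: (le_trans (unif_le (measurable_Cset _ _ _))).
apply: (le_trans _ (leb_itv (loS R delta s k j) _)); last first.
  by rewrite /wid divr_ge0 ?mulr_ge0.
apply: le_measure; rewrite ?inE; [exact: measurable_Cset|exact: measurable_itv|].
exact: Cset_sub.
exact: measurable_Cset.
Qed.

Definition gp v (i : nat) u (j : 'I_k.+1) : bool :=
  (u != v) && (0 < j)%N &&
  `[< inter_nonempty (Ilo delta s eps #|T| (deg e v) i) (Ihi R delta s (deg e v) i)
       (Ilo delta s eps #|T| (deg e u) j) (Ihi R delta s (deg e u) j) >].

Definition Lf (f : {ffun T -> 'I_k.+1}) v (i : nat) : {set T} := [set u | gp v i u (f u)].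

Definition bnd v : R := 42%:R * #|T|%:R * (deg e v)%:R * ln (#|T|%:R : R)
               / (k%:R * delta%:R `^ (1 + eps)).

Definition good (f : {ffun T -> 'I_k.+1}) : bool :=
  [forall v, (0 < f v)%N ==> (#|Lf f v (f v)|%:R <= bnd v)].

Lemma Lset_eq w v i :
  Lset delta s k eps e (fun u => X u w) v i = Lf [ffun u => cl (X u w)] v i.
Proof.
apply/setP => u; rewrite !inE ffunE /gp.
apply/idP/idP.
  move/asboolP => [uv [j [hj hint]]].
  have hv := idxP hj.
  apply/andP; split; first (apply/andP; split).
  - by apply/eqP.
  - by rewrite hv; case/and4P: hj.
  - by apply/asboolP; rewrite hv.
move=> /andP[/andP[uv ipos] /asboolP hint]; apply/asboolP; split; first exact/eqP.
exists (cl (X u w)); split => //; exact: idx_pos.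
Qed.

Lemma Ev_eq :
  [set w | forall (v : T) (i : nat), inS delta s k i (X v w) ->
          ((#|Lset delta s k eps e (fun u => X u w) v i|%:R : R)
            <= 42%:R * #|T|%:R * (deg e v)%:R * ln (#|T|%:R : R)
               / (k%:R * delta%:R `^ (1 + eps)))%R]%classic
  = (\big[setU/set0]_(f | good f) Om cl X f)%classic.
Proof.
apply/seteqP; split.
  move=> w hw; rewrite (bigD1 [ffun u => cl (X u w)]) /=.
    by left; apply/Om_in => u; rewrite ffunE.
  apply/forallP => v; apply/implyP => pos.
  rewrite -Lset_eq; apply: hw; move: pos; rewrite ffunE; exact: idx_pos.
elim/big_ind: _ => [//|A B hA hB w [/hA|/hB]//|f gf w /Om_in hw].
move=> v i hi.
have ef : f = [ffun u => cl (X u w)] by apply/ffunP => u; rewrite ffunE hw.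
rewrite Lset_eq -ef.
have hv := idxP hi; rewrite hw in hv.
move/forallP: gf => /(_ v) /implyP; rewrite hv; apply.
by case/and4P: hi.
Qed.

Lemma bad_bound :
  \sum_(f | ~~ good f) \prod_u pq cl X u (f u) <=
  \sum_v \sum_(i : 'I_k.+1) expR (\sum_u \sum_(j | gp v i u j) pq cl X u j - bnd v / 2).
Proof.
have q0 := pq_ge0 X mC.
apply: (@le_trans _ _ (\sum_v \sum_(i : 'I_k.+1)
   \sum_(f : {ffun T -> 'I_k.+1} | bnd v < #|Lf f v i|%:R) \prod_u pq cl X u (f u))); last first.
  apply: ler_sum => v _; apply: ler_sum => i _.
  exact: (chernoff_fin (pq_ge0 X mC) (pq_sum X mC) (gp v i) (bnd v)).
have P0 (f : {ffun T -> 'I_k.+1}) : 0 <= \prod_u pq cl X u (f u) by apply: prodr_ge0.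
apply: (@le_trans _ _ (\sum_(f : {ffun T -> 'I_k.+1}) \sum_v \sum_(i : 'I_k.+1)
   (if bnd v < #|Lf f v i|%:R then \prod_u pq cl X u (f u) else 0))).
  rewrite big_mkcond /=; apply: ler_sum => f _; case: ifP => hg; last first.
    by apply: sumr_ge0 => v _; apply: sumr_ge0 => i _; case: ifP.
  move: hg => /forallPn [v]; rewrite negb_imply => /andP[pos]; rewrite -ltNge => hlt.
  rewrite [leRHS](bigD1 v) //= [X in _ <= X + _](bigD1 (f v)) //= hlt -addrA lerDl.
  by apply: addr_ge0; [apply: sumr_ge0 => i _; case: ifP|
     apply: sumr_ge0 => v' _; apply: sumr_ge0 => i _; case: ifP].
rewrite exchange_big /=; apply: ler_sum => v _; rewrite exchange_big /=.
by apply: ler_sum => i _; rewrite [in leRHS]big_mkcond.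
Qed.

Lemma mu_bound v (i : 'I_k.+1) (L lnN : R) :
  s%:R * k%:R * L = delta%:R -> 100 <= L -> 1 <= (k%:R : R) -> 0 < (s%:R : R) ->
  34 * lnN <= 1/100 * delta%:R `^ eps -> 0 <= lnN -> ln (#|T|%:R) = lnN ->
  (forall u, delta <= deg e u)%N ->
  \sum_u \sum_(j | gp v i u j) pq cl X u j <=
  #|T|%:R * (2575/1000 * wid R delta s k + 525/1000 * (34 * lnN / delta%:R `^ eps) / k%:R).
Proof.
move=> hskL L100 k1 s0 hc lnN0 hlnN hdeg.
have D0 : 0 < (delta%:R : R) by rewrite ltr0n.
have De0 : 0 < (delta%:R : R) `^ eps by apply: powR_gt0.
set De := (delta%:R : R) `^ eps in hc De0 *.
set A := 4 * s%:R / (delta%:R : R).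
set H := 3 * s%:R / (delta%:R : R).
set c := 34 * lnN / De.
have EIlo (dd ii : nat) : Ilo delta s eps #|T| dd ii = dd%:R * (1 - A * ii%:R - c).
  by rewrite /Ilo hlnN /A /c /De; ring.
have EIhi (dd ii : nat) : Ihi R delta s dd ii = dd%:R * (1 - A * ii%:R + H).
  by rewrite /Ihi /A /H; ring.
have A0 : 0 < A by rewrite /A divr_gt0 // mulr_gt0.
have H0 : 0 <= H by rewrite /H divr_ge0 ?mulr_ge0 // ltW.
have kL : 100 <= (k%:R : R) * L by nra.
have H1 : H <= 3/100.
  rewrite /H ler_pdivrMr // -hskL; nra.
have c0 : 0 <= c by rewrite /c divr_ge0 // ?mulr_ge0 // ltW.
have c1 : c <= 1/100 by rewrite /c ler_pdivrMr.
have Ai : A * i%:R <= 4/100.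
  have ik : (i%:R : R) <= k%:R by rewrite ler_nat -ltnS.
  have h1 : (s%:R : R) * i%:R <= s%:R * k%:R by rewrite ler_wpM2l // ltW.
  have h2 : (s%:R : R) * k%:R * 100 <= s%:R * k%:R * L by rewrite ler_wpM2l // mulr_ge0 // ltW.
  rewrite /A mulrAC ler_pdivrMr // -hskL; nra.
have per u : \sum_(j | gp v i u j) pq cl X u j <=
    2575/1000 * wid R delta s k + 525/1000 * (34 * lnN / De) / k%:R.
  apply: (@le_trans _ _ (\sum_(j | gp v i u j) wid R delta s k)).
    apply: ler_sum => j /andP[/andP[_ jp] _]; exact: pq_le_wid.
  rewrite (eq_bigl (fun j => j \in [set j | gp v i u j])); last by move=> j; rewrite inE.
  rewrite sumr_const.
  have := @count_abs R k.+1 (gp v i u) A H c (deg e u)%:R (deg e v)%:R i%:R A0 H0 H1 c0 c1 Ai.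
  have du0 : 0 < ((deg e u)%:R : R) by rewrite ltr0n (leq_trans d0 (hdeg u)).
  move=> /(_ du0 (ler0n _ _)).
  have hj : forall j : 'I_k.+1, gp v i u j -> 0 <= A * (j:nat)%:R /\
     (deg e u)%:R * (1 - A * (j:nat)%:R - c) <= (deg e v)%:R * (1 - A * i%:R + H) /\
     (deg e v)%:R * (1 - A * i%:R - c) <= (deg e u)%:R * (1 - A * (j:nat)%:R + H).
    move=> j /andP[_ /asboolP [y [/andP[h1 h2] /andP[h3 h4]]]].
    rewrite !EIlo !EIhi in h1 h2 h3 h4.
    split; first by rewrite mulr_ge0 // ltW.
    split; lra.
  move=> /(_ hj) hcnt.
  have w0 : 0 <= wid R delta s k by rewrite /wid divr_ge0 ?mulr_ge0.
  rewrite -[leLHS]mulr_natr; apply: (le_trans (ler_wpM2l w0 hcnt)).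
  rewrite le_eqVlt; apply/orP; left; apply/eqP.
  rewrite /wid /A /H /c.
  have k0' : (k%:R : R) != 0 by rewrite gt_eqF // (lt_le_trans ltr01 k1).
  field.
  by rewrite ?k0' ?(gt_eqF s0) ?(gt_eqF D0) ?(gt_eqF De0).
apply: (le_trans (ler_sum _ (fun u _ => per u))).
rewrite sumr_const -[leLHS]mulr_natr mulrC /c; exact: le_refl.
Qed.
End Main.

End Aux3.
Import Aux3.

Local Open Scope classical_set_scope.
Local Open Scope ring_scope.
Theorem claim5p3 (R : realType) (eps : R) :
  0 < eps -> eps < 4%:R^-1 ->
  exists n0 : nat,
  forall (T : finType) (e : rel T) (delta s k : nat),
    simple_graph e ->
    (n0 <= #|T|)%N ->
    is_min_degree e delta ->
    (ln (#|T|%:R : R)) `^ (2%:R / eps) * (ln (ln (#|T|%:R : R))) `^ (1 / eps)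
      <= delta%:R ->
    (s%:R : R) = delta%:R `^ (2%:R^-1 + eps) ->
    (k%:R : R) = delta%:R `^ (2%:R^-1 - eps) / ln (ln (#|T|%:R : R)) ->
  forall (d : measure_display) (Omega : measurableType d)
         (P : probability Omega R) (X : T -> {RV P >-> R}),
    mutually_independent X ->
    (forall v, uniform01 (X v)) ->
    ((1 - (#|T|%:R ^+ 2)^-1)%:E <=
     P [set w | forall (v : T) (i : nat), inS delta s k i (X v w) ->
          ((#|Lset delta s k eps e (fun u => X u w) v i|%:R : R)
            <= 42%:R * #|T|%:R * (deg e v)%:R * ln (#|T|%:R : R)
               / (k%:R * delta%:R `^ (1 + eps)))%R])%E.
Proof.
move=> e0 e4.
exists (Num.bound (expR (expR 100) : R)).
move=> T e delta s k _ n0le [degmin [v0 hv0]] hD hs hk d Omega P X indep unif.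
rewrite (Ev_eq eps e delta s k X) (bigU_prob (@mC R delta s k) indep) lee_fin.
have tot : \sum_(f : {ffun T -> 'I_k.+1}) \prod_u pq (idx delta s k) X u (f u) = 1.
  rewrite -(bigA_distr_bigA (fun u j => pq (idx delta s k) X u j)) big1 // => u _.
  exact: pq_sum X (@mC R delta s k) u.
rewrite (bigID (@good R eps T e delta s k)) /= in tot.
have bad := bad_bound eps e delta s k X.
have hN : expR (expR 100) < (#|T|%:R : R).
  apply: (lt_le_trans (archi_boundP (expR_ge0 _))); by rewrite ler_nat.
have N0 : 0 < (#|T|%:R : R) by apply: lt_trans hN; exact: expR_gt0.
have lN : expR 100 < ln (#|T|%:R : R).
  by rewrite -[X in X < _](expRK (expR 100)) ltr_ln ?posrE ?expR_gt0.
have e100 : 100 <= expR (100 : R) by apply: le_trans (expR_ge1Dx _); lra.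
have lN0 : 0 < ln (#|T|%:R : R) by apply: lt_trans lN; exact: expR_gt0.
have L100 : 100 <= ln (ln (#|T|%:R : R)).
  rewrite -[X in X <= _](expRK 100) ler_ln ?posrE ?expR_gt0 //; exact: ltW.
set N := (#|T|%:R : R) in hN N0 lN lN0 L100 hD hs hk *.
set lnN := ln N in lN lN0 L100 hD hk *.
set L := ln lnN in L100 hD hk *.
have l100 : 100 <= lnN by lra.
have l1 : 1 <= lnN by lra.
have L1 : 1 <= L by lra.
have [[D1 hDe hskL hsDe hkDeL] hD1e] := numfacts e0 e4 l1 L1 hD hs hk.
set D := (delta%:R : R) in D1 hDe hskL hsDe hkDeL hD1e hs hk *.
set De := D `^ eps in hDe hsDe hkDeL hD1e *.
have d0 : (0 < delta)%N by rewrite -(ler1n R).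
have De0 : 0 < De by apply: powR_gt0; lra.
have s0 : 0 < (s%:R : R) by rewrite hs powR_gt0 //; lra.
have kpos : 0 < (k%:R : R) by rewrite hk divr_gt0 ?powR_gt0 //; lra.
have k0 : (0 < k)%N by rewrite -(ltr0n R).
have k1 : 1 <= (k%:R : R) by rewrite ler1n.
have DN : D <= N by rewrite /D /N ler_nat -hv0 max_card.
have hc : 34 * lnN <= 1/100 * De.
  have : 100 * lnN <= lnN ^+ 2 by rewrite expr2 ler_wpM2r //; lra.
  have : lnN ^+ 2 * 100 <= lnN ^+ 2 * L by rewrite ler_wpM2l // sqr_ge0.
  lra.
have De1 : 1 <= De.
  apply: le_trans hDe; have : 1 <= lnN ^+ 2 by rewrite expr2; nra.
  nra.
have kN : (k.+1%:R : R) <= N.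
  have h1 : 100 <= De * L by nra.
  have h2 : (k%:R : R) * 100 <= k%:R * (De * L) by rewrite ler_wpM2l // ltW.
  rewrite -natr1; lra.
have hb : \sum_v \sum_(i : 'I_k.+1) expR (\sum_u \sum_(j | gp eps e delta s v i u j)
      pq (idx delta s k) X u j - bnd eps e delta k v / 2) <=
    \sum_(v : T) \sum_(i : 'I_k.+1) expR (- 4 * lnN).
  apply: ler_sum => v _; apply: ler_sum => i _; rewrite ler_expR.
  apply: le_trans (lerB (mu_bound unif d0 k0 v i hskL L100 k1 s0 hc (ltW lN0) erefl degmin) (lexx _)) _.
  rewrite /bnd /wid -/N -/lnN -/D -/De hD1e.
  have dv : D <= (deg e v)%:R by rewrite /D ler_nat degmin.
  have L100' : 100 <= L by [].
  exact: (final_ineq (lt_le_trans ltr01 D1) s0 k1 L100' l1 De0 dv hsDe hkDeL DN).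
have expE : expR (- 4 * lnN) = (N ^+ 4)^-1.
  by rewrite mulNr expRN expRM_natl lnK // posrE.
have hsum : \sum_(v : T) \sum_(i : 'I_k.+1) expR (- 4 * lnN) <= (N ^+ 2)^-1.
  rewrite !sumr_const card_ord expE -[_ *+ #|T|]mulr_natr -[_ *+ k.+1]mulr_natr -/N.
  apply: (@le_trans _ _ ((N ^+ 4)^-1 * N * N)); last first.
    rewrite le_eqVlt; apply/orP; left; apply/eqP; field; by rewrite gt_eqF.
  rewrite -!mulrA ler_wpM2l ?invr_ge0 ?exprn_ge0 ?(ltW N0) //.
  by rewrite ler_wpM2r // ltW.
rewrite -[X in X - _ <= _]tot -addrA gerDl subr_le0.
exact: (le_trans bad (le_trans hb hsum)).
Qed.
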